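(* Let $P$ be a non-symmetric operad of sets and let $\overline{P}$ be its reverse. Let $(S,\mu,\eta)$ and $(\overline{S},\overline{\mu},\overline{\eta})$ be the monads on $\mathbf{Set}$ induced by $P$ and $\overline{P}$ respectively. Then $\overline{P}$ is a non-symmetric operad, and the maps $\iota_X:SX\to\overline{S}X$, $(\theta,x_1,\dots,x_n)\mapsto(\theta,x_n,\dots,x_1)$ (for $n\in\mathbb{N}$, $\theta\in P(n)$, $x_i\in X$), form an isomorphism of monads $\iota:(S,\mu,\eta)\to(\overline{S},\overline{\mu},\overline{\eta})$. In particular the monads induced by $P$ and $\overline{P}$ are isomorphic.
   Context: A non-symmetric operad of sets $P$ consists of sets $P(n)$ ($n\in\mathbb{N}$), an identity $1\in P(1)$, and associative, unital compositions $P(n)\times P(k_1)\times\cdots\times P(k_n)\to P(k_1+\cdots+k_n)$, written $\theta\circ(\theta_1,\dots,\theta_n)$. The reverse $\overline{P}$ of $P$ has $\overline{P}(n)=P(n)$, the same identity, and composition $\theta\circ_{\mathrm{rev}}(\theta_1,\dots,\theta_n)=\theta\circ(\theta_n,\dots,\theta_1)$. The monad $(S,\mu,\eta)$ induced by an operad $P$: $SX=\sum_{n\in\mathbb{N}}P(n)\times X^n$, $\eta_X(x)=(1,x)$, and $\mu_X$ sends $(\theta,(\theta_1,x_1^1,\dots,x_1^{k_1}),\dots,(\theta_n,x_n^1,\dots,x_n^{k_n}))$ to $(\theta\circ(\theta_1,\dots,\theta_n),x_1^1,\dots,x_1^{k_1},\dots,x_n^1,\dots,x_n^{k_n})$. An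 isomorphism of monads $\iota:(S,\mu,\eta)\to(S',\mu',\eta')$ is a natural isomorphism $\iota:S\to S'$ with $\iota_X\eta_X=\eta'_X$ and $\iota_X\circ\mu_X=\mu'_X\circ\iota_{S'X}\circ S\iota_X$ for every set $X$. *)

(* Defs.v *)
From mathcomp Require Import all_boot.
Set Implicit Arguments. Unset Strict Implicit. Unset Printing Implicit Defensive.

(* The composition theta o (theta_1,...,theta_n) takes theta : P n and the  *)
(* list [theta_1;...;theta_n] of operations; its typing constraint (the     *)
(* result lies in P (k_1+...+k_n)) is recorded as [ocomp_arity].  Values on *)
(* lists of the wrong length are irrelevant junk and never used.            *)
Record opdata := OpData {
  P : nat -> Type;
  oid : P 1;
  ocomp : forall n, P n -> seq {k & P k} -> {k & P k};
  ocomp_arity : forall n (t : P n) (ts : seq {k & P k}),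
      size ts = n -> tag (ocomp t ts) = sumn (map (fun u => tag u) ts)
}.

Notation Op D := {k : nat & P D k}.

Definition opunit (D : opdata) : Op D := existT (P D) 1 (oid D).

Definition is_operad (D : opdata) : Prop :=
  (forall t : Op D, ocomp (oid D) [:: t] = t) /\
  (forall n (t : P D n), ocomp t (nseq n (opunit D)) = existT (P D) n t) /\
  (forall n (t : P D n) (ts : seq (Op D)) (tss : seq (seq (Op D))),
      size ts = n ->
      all2 (fun u us => size us == tag u) ts tss ->
      ocomp (tagged (ocomp t ts)) (flatten tss)
      = ocomp t [seq ocomp (tagged p.1) p.2 | p <- zip ts tss]).

Lemma revOp_arity (D : opdata) n (t : P D n) (ts : seq (Op D)) :
  size ts = n -> tag (ocomp t (rev ts)) = sumn (map (fun u => tag u) ts).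
Proof.
move=> hs; rewrite ocomp_arity ?size_rev // map_rev.
elim: ts {hs} => [|a s IH] //=; rewrite rev_cons -cats1.
by rewrite sumn_cat /= IH addn0 addnC.
Qed.

Definition revOp (D : opdata) : opdata :=
  @OpData (P D) (oid D) (fun n t ts => ocomp t (rev ts)) (@revOp_arity D).

(* The monad on Set (here: Type) induced by an operad:                      *)
(*   S X = sum_n P(n) x X^n,  eta x = (1, x),                              *)
(*   mu (theta, (theta_1, xs_1), ..., (theta_n, xs_n))                     *)
(*      = (theta o (theta_1,...,theta_n), xs_1 ++ ... ++ xs_n).            *)
Definition Smon (D : opdata) (X : Type) : Type := {t : Op D & (tag t).-tuple X}.

Definition Smap (D : opdata) (X Y : Type) (f : X -> Y) (z : Smon D X) : Smon D Y :=
  existT (fun t : Op D => (tag t).-tuple Y) (tag z) (map_tuple f (tagged z)).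

Definition Seta (D : opdata) (X : Type) (x : X) : Smon D X :=
  existT (fun t : Op D => (tag t).-tuple X) (opunit D) [tuple x].

Lemma Smu_size (D : opdata) (X : Type) (z : Smon D (Smon D X)) :
  size (flatten [seq val (tagged y) | y : Smon D X <- val (tagged z)])
  == tag (ocomp (tagged (tag z)) [seq tag y | y : Smon D X <- val (tagged z)]).
Proof.
rewrite ocomp_arity; last by rewrite size_map size_tuple.
rewrite size_flatten /shape -!map_comp; apply/eqP; congr sumn.
by apply: eq_map => y /=; rewrite size_tuple.
Qed.

Definition Smu (D : opdata) (X : Type) (z : Smon D (Smon D X)) : Smon D X :=
  existT (fun t : Op D => (tag t).-tuple X)
    (ocomp (tagged (tag z)) [seq tag y | y : Smon D X <- val (tagged z)])
    (Tuple (Smu_size z)).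

Definition rev_iota (D : opdata) (X : Type) (z : Smon D X) : Smon (revOp D) X :=
  existT (fun t : Op (revOp D) => (tag t).-tuple X) (tag z) (rev_tuple (tagged z)).

Definition is_monad_iso
  (S S' : Type -> Type)
  (Sm : forall X Y, (X -> Y) -> S X -> S Y)
  (S'm : forall X Y, (X -> Y) -> S' X -> S' Y)
  (eta : forall X, X -> S X) (eta' : forall X, X -> S' X)
  (mu : forall X, S (S X) -> S X) (mu' : forall X, S' (S' X) -> S' X)
  (i : forall X, S X -> S' X) : Prop :=
  (forall X Y (f : X -> Y) (z : S X), i Y (Sm X Y f z) = S'm X Y f (i X z)) /\
  (forall X, bijective (i X)) /\
  (forall X (x : X), i X (eta X x) = eta' X x) /\
  (forall X (z : S (S X)),
      i X (mu X z) = mu' X (i (S' X) (Sm (S X) (S' X) (i X) z))).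

(* Main.v *)
Require Import Defs.
From mathcomp Require Import all_boot.

Lemma sig_eq (D : opdata) (X : Type) (a b : Op D)
  (ta : (tag a).-tuple X) (tb : (tag b).-tuple X) :
  a = b -> val ta = val tb ->
  existT (fun t : Op D => (tag t).-tuple X) a ta = existT _ b tb.
Proof. by move=> e; subst b => h; congr existT; apply: val_inj. Qed.

Lemma rev_flatten_map (T : Type) (ss : seq (seq T)) :
  rev (flatten ss) = flatten (rev (map rev ss)).
Proof.
elim: ss => [|s ss IH] //=.
by rewrite rev_cat IH rev_cons -cats1 flatten_cat /= cats0.
Qed.

Lemma zip_rev' (A B : Type) (s : seq A) (t : seq B) :
  size s = size t -> zip (rev s) (rev t) = rev (zip s t).
Proof.
elim: s t => [|a s IH] [|b t] //= [h].
by rewrite !rev_cons zip_rcons ?size_rev // IH.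
Qed.

Lemma all2_cat' (A B : Type) (r : A -> B -> bool) s1 s2 t1 t2 :
  size s1 = size t1 -> all2 r (s1 ++ s2) (t1 ++ t2) = all2 r s1 t1 && all2 r s2 t2.
Proof. by elim: s1 t1 => [|a s IH] [|b t] //= [h]; rewrite IH // andbA. Qed.

Lemma all2_rev' (A B : Type) (r : A -> B -> bool) s t :
  size s = size t -> all2 r (rev s) (rev t) = all2 r s t.
Proof.
elim: s t => [|a s IH] [|b t] //= [h].
by rewrite !rev_cons -!cats1 all2_cat' ?size_rev // IH //= andbT andbC.
Qed.

Theorem mainTheorem2 (D : opdata) :
  is_operad D ->
  is_operad (revOp D) /\
  is_monad_iso (@Smap D) (@Smap (revOp D))
    (@Seta D) (@Seta (revOp D)) (@Smu D) (@Smu (revOp D)) (@rev_iota D).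
Proof.
move=> [h1 [h2 h3]]; split.
  split; first by move=> t /=; exact: h1.
  split; first by move=> n t /=; rewrite rev_nseq; exact: h2.
  move=> n t ts tss hs ha /=.
  have hsz : size ts = size tss by clear hs; by elim: ts tss ha => [|a s IH] [|b t'] //= /andP[_ /IH ->].
  rewrite rev_flatten_map.
  rewrite (h3 n t (rev ts) (rev (map rev tss))); last first.
  - rewrite all2_rev' ?size_map //.
    move: ha hsz; clear hs; elim: ts tss => [|a s IH] [|b t'] //=.
    by move=> /andP[hb hr] [hz]; rewrite size_rev hb IH.
  - by rewrite size_rev.
  congr ocomp.
  rewrite zip_rev' ?size_map // -map_rev.
  rewrite !map_rev; congr rev.
  clear hs ha; elim: ts tss hsz => [|a s IH] [|b t'] //= [hz].
  by rewrite IH.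
split.
  move=> X Y f z; apply: sig_eq => //=; by rewrite map_rev.
split.
  move=> X.
  exists (fun z : Smon (revOp D) X =>
    existT (fun t : Op D => (tag t).-tuple X) (tag z) (rev_tuple (tagged z))).
  - move=> [a t]; rewrite /rev_iota /=; apply: (@sig_eq D) => //=; by rewrite revK.
  - move=> [a t]; rewrite /rev_iota /=; apply: (@sig_eq (revOp D)) => //=; by rewrite revK.
split.
  by move=> X x; apply: sig_eq.
move=> X z; apply: sig_eq => /=.
  congr ocomp; rewrite map_rev revK -map_comp; apply: eq_map => y //.
rewrite rev_flatten_map map_rev; congr flatten; congr rev.
by rewrite -!map_comp; apply: eq_map.
Qed.
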